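(* (i) Let $\rho_{AB}$ be a state on $\mathbb{C}^m\otimes\mathbb{C}^n$, and let $\rho^+_A,\rho^+_B$ be the reduced states of $\rho_{AB}^+$. If $\mathrm{rank}(\rho^+_A)=p$ and $\mathrm{rank}(\rho^+_B)=q$, then $\rho_{AB}$ is a $p\times q$ state, i.e. $\mathrm{rank}(\mathrm{tr}_B\rho_{AB})\le p$ and $\mathrm{rank}(\mathrm{tr}_A\rho_{AB})\le q$. (ii) Let $\rho_{AB}=\sum_{x,y=1}^m|x\rangle\langle y|\otimes\rho_{xy}$ (with $\rho_{xy}\in\mathcal{M}_m(\mathbb{C})$) be a PPT state on $\mathbb{C}^m\otimes\mathbb{C}^m$ whose real part is diagonal, $\rho_{AB}^+=\sum_{j,k=1}^m p_{j,k}|j,k\rangle\langle j,k|$ with all $p_{j,k}\ge0$. Then: (ii.a) If $p_{j,k}=0$, then all entries in the $k$-th rows and $k$-th columns of $\rho_{j1},\dots,\rho_{jm}$ and of $\rho_{1j},\dots,\rho_{mj}$ are zero. (ii.b) If for two distinct $x,y\in\{1,\dots,m\}$ there are distinct $k_1,\dots,k_s$ and distinct $l_1,\dots,l_t$ in $\{1,\dots,m\}$ with $p_{x,k_1}=\dots=p_{x,k_s}=0$ and $p_{y,l_1}=\dots=p_{y,l_t}=0$, then for every $k\in\{k_1,\dots,k_s\}\cup\{l_1,\dots,l_t\}$ the $k$-th row and the $k$-th column of the blocks $\rho_{xy}$ and $\rho_{yx}$ are zero. (ii.c) If $\rho_{AB}^+=\sum_{j=1}^m p_{j,j}|\pi_1(j),\pi_2(j)\rangle\langle\pi_1(j),\pi_2(j)|$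 for permutations $\pi_1,\pi_2$ of $\{1,\dots,m\}$, then $\rho_{AB}=\rho_{AB}^+$, which is separable.
   Context: For a Hermitian $\rho$, $\rho^+=\frac12(\rho+\rho^* )$ is its real part (entrywise complex conjugate $\rho^*$). A state $\rho_{AB}$ is PPT if its partial transpose with respect to subsystem $A$ is positive semidefinite. *)

(* Defs.v *)
(* Complex numbers are modelled by an arbitrary
   numClosedFieldType C (e.g. algC, or complex R for R : rcfType). *)
From mathcomp Require Import all_boot all_order all_fingroup all_algebra.
Set Implicit Arguments. Unset Strict Implicit. Unset Printing Implicit Defensive.
Import Order.TTheory GRing.Theory Num.Theory.
Local Open Scope ring_scope.

Section QDefs.
Variable C : numClosedFieldType.

Definition adj (p q : nat) (A : 'M[C]_(p, q)) : 'M[C]_(q, p) := map_mx Num.conj A^T.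

Definition hermitian (d : nat) (A : 'M[C]_d) : Prop := adj A = A.

Definition psd (d : nat) (A : 'M[C]_d) : Prop :=
  hermitian A /\ forall v : 'cV[C]_d, 0 <= (adj v *m A *m v) 0 0.

Definition is_state (d : nat) (A : 'M[C]_d) : Prop := psd A /\ \tr A = 1.

Definition realpart (d : nat) (A : 'M[C]_d) : 'M[C]_d :=
  2^-1 *: (A + map_mx Num.conj A).

(* C^m (x) C^n is 'cV_(m*n); basis vector |i,k> has index mxvec_index i k. *)
(* E rho i k j l = <i,k| rho |j,l>                                          *)
Definition E (m n : nat) (rho : 'M[C]_(m * n)) (i : 'I_m) (k : 'I_n)
  (j : 'I_m) (l : 'I_n) : C := rho (mxvec_index i k) (mxvec_index j l).

(* inverse of mxvec_index *)
Definition unpair (m n : nat) (r : 'I_(m * n)) : 'I_m * 'I_n :=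
  enum_val (cast_ord (esym (mxvec_cast m n)) r).

Definition kron (m n : nat) (A : 'M[C]_m) (B : 'M[C]_n) : 'M[C]_(m * n) :=
  \matrix_(r, c) (A (unpair r).1 (unpair c).1 * B (unpair r).2 (unpair c).2).

Definition trB (m n : nat) (rho : 'M[C]_(m * n)) : 'M[C]_m :=
  \matrix_(i, j) \sum_(k < n) E rho i k j k.
Definition trA (m n : nat) (rho : 'M[C]_(m * n)) : 'M[C]_n :=
  \matrix_(k, l) \sum_(i < m) E rho i k i l.

Definition ptA (m n : nat) (rho : 'M[C]_(m * n)) : 'M[C]_(m * n) :=
  \matrix_(r, c) E rho (unpair c).1 (unpair r).2 (unpair r).1 (unpair c).2.

Definition PPT (m n : nat) (rho : 'M[C]_(m * n)) : Prop := psd (ptA rho).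

Definition separable (m n : nat) (rho : 'M[C]_(m * n)) : Prop :=
  exists (N : nat) (w : 'I_N -> C) (a : 'I_N -> 'cV[C]_m) (b : 'I_N -> 'cV[C]_n),
    (forall t, 0 <= w t) /\
    rho = \sum_(t < N) w t *: kron (a t *m adj (a t)) (b t *m adj (b t)).

End QDefs.

(* Main.v *)
Require Import Defs.
From mathcomp Require Import all_boot all_order all_fingroup all_algebra.
From mathcomp Require Import ring zify.
Set Implicit Arguments. Unset Strict Implicit. Unset Printing Implicit Defensive.
Import Order.TTheory GRing.Theory Num.Theory.
Local Open Scope ring_scope.

Section Aux.
Variable C : numClosedFieldType.

Lemma adjE p q (A : 'M[C]_(p, q)) i j : adj A i j = (A j i)^*.
Proof. by rewrite /adj !mxE. Qed.

Lemma adjK p q (A : 'M[C]_(p, q)) : adj (adj A) = A.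
Proof. by apply/matrixP => i j; rewrite !adjE conjCK. Qed.

Lemma adjM p q r (A : 'M[C]_(p, q)) (B : 'M[C]_(q, r)) :
  adj (A *m B) = adj B *m adj A.
Proof.
apply/matrixP => i j; rewrite adjE mxE [RHS]mxE rmorph_sum; apply: eq_bigr => k _.
by rewrite !adjE rmorphM mulrC.
Qed.

Lemma adjD p q (A B : 'M[C]_(p, q)) : adj (A + B) = adj A + adj B.
Proof. by apply/matrixP => i j; rewrite [LHS]adjE [RHS]mxE !adjE mxE rmorphD. Qed.

Lemma adjZ p q a (A : 'M[C]_(p, q)) : adj (a *: A) = a^* *: adj A.
Proof. by apply/matrixP => i j; rewrite [LHS]adjE [RHS]mxE !adjE mxE rmorphM. Qed.

Lemma adj0 p q : adj (0 : 'M[C]_(p, q)) = 0.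
Proof. by apply/matrixP => i j; rewrite [LHS]adjE !mxE rmorph0. Qed.

Lemma adj_delta p q (i : 'I_p) (j : 'I_q) : adj (delta_mx i j : 'M[C]_(p,q)) = delta_mx j i.
Proof. by apply/matrixP => a b; rewrite adjE !mxE rmorph_nat andbC. Qed.

Definition qf d (A : 'M[C]_d) (u w : 'cV[C]_d) : C := (adj u *m A *m w) 0 0.

Lemma qf_sym d (A : 'M[C]_d) (u w : 'cV[C]_d) : Defs.hermitian A -> qf A u w = ((qf A w u : C)^*).
Proof.
move=> hA; rewrite /qf -adjE !adjM adjK hA mulmxA //.
Qed.

Lemma qfDl d (A : 'M[C]_d) u1 u2 w : qf A (u1 + u2) w = qf A u1 w + qf A u2 w.
Proof. by rewrite /qf adjD !mulmxDl mxE. Qed.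
Lemma qfDr d (A : 'M[C]_d) u w1 w2 : qf A u (w1 + w2) = qf A u w1 + qf A u w2.
Proof. by rewrite /qf mulmxDr mxE. Qed.
Lemma qfZl d (A : 'M[C]_d) a u w : qf A (a *: u) w = a^* * qf A u w.
Proof. by rewrite /qf adjZ -!scalemxAl mxE. Qed.
Lemma qfZr d (A : 'M[C]_d) a u w : qf A u (a *: w) = a * qf A u w.
Proof. by rewrite /qf -!scalemxAr mxE. Qed.

Lemma nn_anti (x y : C) : 0 <= x -> 0 <= y -> x + y = 0 -> x = 0.
Proof.
move=> hx hy hxy; apply/le_anti; rewrite hx andbT.
have -> : x = - y by apply/eqP; rewrite -addr_eq0 hxy.
by rewrite oppr_le0.
Qed.

Lemma psd_qf0 d (A : 'M[C]_d) u : psd A -> qf A u u = 0 -> forall w, qf A w u = 0.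
Proof.
case=> hA pA qu w.
set a := qf A w u; set dd := qf A w w.
have hd : 0 <= dd := pA w.
have hc : dd^* = dd by rewrite geC0_conj.
set n := `|a|.
have hn : 0 <= n by rewrite normr_ge0.
pose v := (n ^+ 2) *: w + (- (dd + 1) * a^*) *: u.
have := pA v; rewrite -/(qf A v v) /v !(qfDl, qfDr, qfZl, qfZr) qu -/a -/dd.
rewrite (qf_sym u w hA) -/a.
have hn2 : (n ^+ 2)^* = n ^+ 2 by rewrite geC0_conj // exprn_ge0.
rewrite hn2 !rmorphM rmorphN rmorphD rmorph1 /= hc conjCK.
set N := n ^+ 2.
have hna : a * a^* = N by rewrite /N /n normCK.
set X := (X in 0 <= X).
have -> : X = - ((dd + 2) * N ^+ 2) + (- 2%:R * (dd + 1) * N) * (a * a^* - N).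
  rewrite /X; ring.
rewrite hna subrr mulr0 addr0 oppr_ge0 => hle.
have hX : (dd + 2) * N ^+ 2 = 0.
  apply/le_anti; rewrite hle /=; apply: mulr_ge0; last by rewrite exprn_ge0 // exprn_ge0.
  by rewrite addr_ge0.
have hd2 : dd + 2 != 0.
  by rewrite gt_eqF // ltr_wpDl.
move/eqP: hX; rewrite mulf_eq0 (negPf hd2) /= !expf_eq0 /= normr_eq0.
by move/eqP.
Qed.

Lemma qf_delta d (A : 'M[C]_d) i j : qf A (delta_mx i 0) (delta_mx j 0) = A i j.
Proof. by rewrite /qf adj_delta -rowE -colE !mxE. Qed.

Lemma psd_diag_ge0 d (A : 'M[C]_d) i : psd A -> 0 <= A i i.
Proof. by case=> _ pA; have := pA (delta_mx i 0); rewrite -/(qf _ _ _) qf_delta. Qed.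

Lemma psd_diag0 d (A : 'M[C]_d) i : psd A -> A i i = 0 -> forall j, A j i = 0 /\ A i j = 0.
Proof.
move=> pA h0 j.
have h1 : A j i = 0.
  by rewrite -qf_delta (psd_qf0 pA) // qf_delta.
split=> //; rewrite -qf_delta qf_sym; last by case: pA.
by rewrite qf_delta h1 rmorph0.
Qed.

Lemma realpartE d (A : 'M[C]_d) r c : realpart A r c = 2^-1 * (A r c + (A r c)^*).
Proof. by rewrite /realpart !mxE. Qed.

Lemma realpart_diag d (A : 'M[C]_d) r : psd A -> realpart A r r = A r r.
Proof.
move=> pA; rewrite realpartE geC0_conj; last exact: psd_diag_ge0.
have h2 : (2 : C) != 0 by rewrite pnatr_eq0.
by field.
Qed.

Lemma unpairK m n (i : 'I_m) (k : 'I_n) : unpair (mxvec_index i k) = (i, k).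
Proof. by rewrite /unpair /mxvec_index cast_ordK enum_rankK. Qed.

Lemma mxvec_index_inj m n (i j : 'I_m) (k l : 'I_n) :
  mxvec_index i k = mxvec_index j l -> i = j /\ k = l.
Proof. by move=> /(congr1 (@unpair m n)); rewrite !unpairK => -[-> ->]. Qed.

Lemma ptAE m n (rho : 'M[C]_(m * n)) a b c e :
  ptA rho (mxvec_index a b) (mxvec_index c e) = E rho c b a e.
Proof. by rewrite /ptA mxE !unpairK. Qed.


Lemma zero_of_p0 (m : nat) (rho : 'M[C]_(m * m)) (p : 'I_m -> 'I_m -> C) :
  is_state rho -> PPT rho ->
  (forall i k j l, E (realpart rho) i k j l =
                   if (i == j) && (k == l) then p i k else 0) ->
  forall j k : 'I_m, p j k = 0 ->
  forall x l : 'I_m,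
    [/\ E rho j k x l = 0, E rho j l x k = 0,
        E rho x k j l = 0 & E rho x l j k = 0].
Proof.
move=> [pr _] pp hE j k hp x l.
have h0 : rho (mxvec_index j k) (mxvec_index j k) = 0.
  by rewrite -realpart_diag // -/(E _ j k j k) hE !eqxx.
have h0' : ptA rho (mxvec_index j k) (mxvec_index j k) = 0 by rewrite ptAE.
have [c1 r1] := psd_diag0 pr h0 (mxvec_index x l).
have [c2 r2] := psd_diag0 pp h0' (mxvec_index x l).
split=> //.
- by rewrite -ptAE.
- by rewrite -ptAE.
Qed.


Lemma mxvec_index_eqE m n (i j : 'I_m) (k l : 'I_n) :
  (mxvec_index i k == mxvec_index j l) = (i == j) && (k == l).
Proof.
apply/eqP/andP => [/mxvec_index_inj [-> ->] // | [/eqP -> /eqP ->] //].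
Qed.

Lemma diag_offdiag0 (m : nat) (rho : 'M[C]_(m * m)) (p : 'I_m -> 'I_m -> C) :
  (forall i k j l, E (realpart rho) i k j l =
                   if (i == j) && (k == l) then p i k else 0) ->
  forall r c, r != c -> realpart rho r c = 0.
Proof.
move=> hE r c; case/mxvec_indexP: r => i k; case/mxvec_indexP: c => j l.
by rewrite mxvec_index_eqE -/(E _ i k j l) hE => /negPf ->.
Qed.

Lemma kron_delta m n (r : 'I_(m * n)) :
  kron (delta_mx (unpair r).1 (unpair r).1 : 'M[C]_m) (delta_mx (unpair r).2 (unpair r).2)
  = delta_mx r r.
Proof.
apply/matrixP => r' c'; rewrite /kron !mxE.
case/mxvec_indexP: r => a b; case/mxvec_indexP: r' => i k; case/mxvec_indexP: c' => j l.
rewrite !unpairK /= !mxvec_index_eqE -natrM mulnb.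
by case: (i == a); case: (j == a); case: (k == b); case: (l == b).
Qed.

Lemma diag_separable m n (R : 'M[C]_(m * n)) :
  (forall r c, r != c -> R r c = 0) -> (forall r, 0 <= R r r) -> separable R.
Proof.
move=> hoff hpos.
exists (m * n)%N, (fun r => R r r), (fun r => delta_mx (unpair r).1 0),
  (fun r => delta_mx (unpair r).2 0); split=> //.
apply/matrixP => r' c'; rewrite summxE.
under eq_bigr => r _ do rewrite !adj_delta !mul_delta_mx kron_delta !mxE.
case: (eqVneq r' c') => [<- | ne].
  rewrite (bigD1 r') //= big1 ?eqxx ?mulr1 ?addr0 // => r hr.
  by rewrite eq_sym (negPf hr) mulr0.
rewrite hoff // big1 // => r _.
case: eqP => [<-|_]; last by rewrite mulr0.
by rewrite eq_sym (negPf ne) mulr0.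
Qed.


Lemma part_iic (m : nat) (rho : 'M[C]_(m * m)) (p : 'I_m -> 'I_m -> C) :
  is_state rho -> PPT rho ->
  (forall i k j l, E (realpart rho) i k j l =
                   if (i == j) && (k == l) then p i k else 0) ->
  (forall j k, 0 <= p j k) ->
  forall (pi1 pi2 : 'S_m) (c : 'I_m -> C),
     realpart rho = \sum_(t < m) c t *:
       delta_mx (mxvec_index (pi1 t) (pi2 t)) (mxvec_index (pi1 t) (pi2 t)) ->
     rho = realpart rho /\ separable (realpart rho).
Proof.
move=> [pr _] pp hE hp pi1 pi2 c hR.
have hsupp : forall r, rho r r != 0 -> exists t, r = mxvec_index (pi1 t) (pi2 t).
  move=> r; rewrite -realpart_diag // hR summxE.
  case: (boolP [exists t, r == mxvec_index (pi1 t) (pi2 t)]).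
    by move=> /existsP [t /eqP ->]; exists t.
  move=> /existsPn hn; rewrite big1 ?eqxx // => t _.
  by rewrite !mxE (negPf (hn t)) mulr0.
have hoff : forall r c, r != c -> rho r c = 0.
  move=> r0 c0; case/mxvec_indexP: r0 => i k; case/mxvec_indexP: c0 => j l => ne.
  case: (eqVneq (rho (mxvec_index i k) (mxvec_index i k)) 0) => [h|/hsupp [t ht]].
    by have [_ ->] := psd_diag0 pr h (mxvec_index j l).
  case: (eqVneq (rho (mxvec_index j l) (mxvec_index j l)) 0) => [h|/hsupp [u hu]].
    by have [-> _] := psd_diag0 pr h (mxvec_index i k).
  have [ei ek] := mxvec_index_inj ht; have [ej el] := mxvec_index_inj hu.
  case: (eqVneq (ptA rho (mxvec_index j k) (mxvec_index j k)) 0) => [h|].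
    have [_ h2] := psd_diag0 pp h (mxvec_index i l).
    by move: h2; rewrite ptAE.
  rewrite ptAE => /hsupp [w hw]; have [wj wk] := mxvec_index_inj hw.
  have wu : w = u by apply: (perm_inj (s := pi1)); rewrite -wj.
  have wt : w = t by apply: (perm_inj (s := pi2)); rewrite -wk.
  by move: ne; rewrite ei ek ej el -wu -wt eqxx.
have hrho : rho = realpart rho.
  apply/matrixP => r c0; case: (eqVneq r c0) => [<-|ne].
    by rewrite realpart_diag.
  by rewrite hoff // (diag_offdiag0 hE ne).
split=> //; apply: diag_separable.
  by move=> r c0 ne; rewrite (diag_offdiag0 hE ne).
move=> r; case/mxvec_indexP: r => i k.
by rewrite -/(E _ i k i k) hE !eqxx; apply: hp.
Qed.

Lemma qfDA d (A B : 'M[C]_d) v : qf (A + B) v v = qf A v v + qf B v v.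
Proof. by rewrite /qf mulmxDr mulmxDl mxE. Qed.

Lemma psd0 d : psd (0 : 'M[C]_d).
Proof.
split; first by rewrite /Defs.hermitian adj0.
by move=> v; rewrite mulmx0 mul0mx mxE.
Qed.

Lemma psdD d (A B : 'M[C]_d) : psd A -> psd B -> psd (A + B).
Proof.
move=> [hA pA] [hB pB]; split; first by rewrite /Defs.hermitian adjD hA hB.
by move=> v; have := qfDA A B v; rewrite /qf => ->; apply: addr_ge0; [apply: pA | apply: pB].
Qed.

Lemma psd_sum d I (r : seq I) (F : I -> 'M[C]_d) :
  (forall i, psd (F i)) -> psd (\sum_(i <- r) F i).
Proof.
move=> h; elim: r => [|x r IH]; first by rewrite big_nil; apply: psd0.
by rewrite big_cons; apply: psdD.
Qed.

Lemma psd_congr N d (A : 'M[C]_N) (X : 'M[C]_(N, d)) : psd A -> psd (adj X *m A *m X).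
Proof.
move=> [hA pA]; split.
  by rewrite /Defs.hermitian !adjM adjK hA mulmxA.
move=> v; have := pA (X *m v).
by rewrite adjM !mulmxA.
Qed.

Lemma psd_conj d (A : 'M[C]_d) : psd A -> psd (map_mx Num.conj A).
Proof.
move=> [hA pA]; split.
  apply/matrixP => i j; rewrite adjE !mxE.
  by rewrite -[in RHS]hA adjE.
move=> v; have := pA (map_mx Num.conj v).
have -> : adj v *m map_mx Num.conj A *m v =
   map_mx Num.conj (adj (map_mx Num.conj v) *m A *m map_mx Num.conj v).
  rewrite !map_mxM; congr (_ *m _ *m _).
    by apply/matrixP => i j; rewrite [LHS]adjE [RHS]mxE [X in _ = X^*]adjE !mxE conjCK.
  by apply/matrixP => i j; rewrite !mxE /= conjCK.
move=> h; rewrite mxE geC0_conj //.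
Qed.

Lemma sum_delta N (F : 'I_N -> C) a : \sum_c F c * (c == a)%:R = F a.
Proof.
rewrite (bigD1 a) //= eqxx mulr1 big1 ?addr0 // => c /negPf ->; exact: mulr0.
Qed.

Lemma rank_psdD d (P Q : 'M[C]_d) : psd P -> psd Q -> (\rank P <= \rank (P + Q)%R)%N.
Proof.
move=> pP pQ.
have sub : (kermx (P + Q) <= kermx P)%MS.
  apply/sub_kermxP; apply/row_matrixP => i; rewrite row_mul row0.
  set u := row i (kermx (P + Q)).
  have hu : u *m (P + Q) = 0 by rewrite /u -row_mul mulmx_ker row0.
  have h0 : qf (P + Q) (adj u) (adj u) = 0 by rewrite /qf adjK hu mul0mx mxE.
  have hP : qf P (adj u) (adj u) = 0.
    have hs := qfDA P Q (adj u); rewrite h0 in hs.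
    exact: (nn_anti (pP.2 (adj u)) (pQ.2 (adj u)) (esym hs)).
  have hPv : P *m adj u = 0.
    apply/matrixP => a b; rewrite (ord1 b) [RHS]mxE.
    have := psd_qf0 pP hP (delta_mx a 0).
    by rewrite /qf adj_delta -rowE -row_mul mxE.
  by rewrite -[u]adjK -[P]pP.1 -adjM hPv adj0.
have := mxrankS sub; rewrite !mxrank_ker => h.
have h1 := rank_leq_row P; have h2 := rank_leq_row (P + Q).
move: h h1 h2; set r1 := \rank P; set r2 := \rank (P + Q)%R; lia.
Qed.

Definition JB m n (k : 'I_n) : 'M[C]_(m * n, m) := \matrix_(r, i) (r == mxvec_index i k)%:R.
Definition JA m n (i : 'I_m) : 'M[C]_(m * n, n) := \matrix_(r, k) (r == mxvec_index i k)%:R.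

Lemma congr_entry N d (rho : 'M[C]_N) (X : 'M[C]_(N, d)) (f : 'I_d -> 'I_N) :
  (forall r i, X r i = (r == f i)%:R) ->
  forall i j, (adj X *m rho *m X) i j = rho (f i) (f j).
Proof.
move=> hX i j; rewrite mxE.
under eq_bigr => c _ do rewrite hX mxE.
rewrite sum_delta.
under eq_bigr => r _ do rewrite adjE hX rmorph_nat mulrC.
exact: sum_delta.
Qed.

Lemma trB_sum m n (rho : 'M[C]_(m * n)) : trB rho = \sum_k adj (JB m k) *m rho *m JB m k.
Proof.
apply/matrixP => i j; rewrite mxE summxE; apply: eq_bigr => k _.
by rewrite (@congr_entry _ _ rho (JB m k) (fun i => mxvec_index i k)) // => r a; rewrite mxE.
Qed.

Lemma trA_sum m n (rho : 'M[C]_(m * n)) : trA rho = \sum_i adj (JA n i) *m rho *m JA n i.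
Proof.
apply/matrixP => a b; rewrite mxE summxE; apply: eq_bigr => i _.
by rewrite (@congr_entry _ _ rho (JA n i) (fun k => mxvec_index i k)) // => r c; rewrite mxE.
Qed.

Lemma trB_real m n (rho : 'M[C]_(m * n)) :
  trB (realpart rho) = 2^-1 *: (trB rho + map_mx Num.conj (trB rho)).
Proof.
apply/matrixP => i j; rewrite [LHS]mxE [RHS]mxE [X in _ * X]mxE [X in _ * (_ + X)]mxE.
rewrite [X in _ * (_ + X^*)]mxE !mxE rmorph_sum -big_split mulr_sumr; apply: eq_bigr => k _.
by rewrite /E realpartE.
Qed.

Lemma trA_real m n (rho : 'M[C]_(m * n)) :
  trA (realpart rho) = 2^-1 *: (trA rho + map_mx Num.conj (trA rho)).
Proof.
apply/matrixP => i j; rewrite [LHS]mxE [RHS]mxE [X in _ * X]mxE [X in _ * (_ + X)]mxE.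
rewrite [X in _ * (_ + X^*)]mxE !mxE rmorph_sum -big_split mulr_sumr; apply: eq_bigr => k _.
by rewrite /E realpartE.
Qed.

Lemma rank_real d (T : 'M[C]_d) : psd T ->
  (\rank T <= \rank (2^-1 *: (T + map_mx Num.conj T))%R)%N.
Proof.
move=> pT; rewrite mxrank_scale_nz; last by rewrite invr_eq0 pnatr_eq0.
by apply: rank_psdD => //; apply: psd_conj.
Qed.
End Aux.

Theorem lemma6 (C : numClosedFieldType) :
  (* (i) *)
  (forall (m n p q : nat) (rho : 'M[C]_(m * n)),
     is_state rho ->
     \rank (trB (realpart rho)) = p ->
     \rank (trA (realpart rho)) = q ->
     (\rank (trB rho) <= p)%N /\ (\rank (trA rho) <= q)%N)
  /\
  (* (ii) *)
  (forall (m : nat) (rho : 'M[C]_(m * m)) (p : 'I_m -> 'I_m -> C),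
     is_state rho -> PPT rho ->
     (forall i k j l, E (realpart rho) i k j l =
                      if (i == j) && (k == l) then p i k else 0) ->
     (forall j k, 0 <= p j k) ->
     (* (ii.a) *)
     (forall j k : 'I_m, p j k = 0 ->
        forall x l : 'I_m,
          [/\ E rho j k x l = 0, E rho j l x k = 0,
              E rho x k j l = 0 & E rho x l j k = 0])
     /\
     (* (ii.b) *)
     (forall (x y : 'I_m) (K L : {set 'I_m}), x != y ->
        (forall k, k \in K -> p x k = 0) ->
        (forall l, l \in L -> p y l = 0) ->
        forall k, k \in K :|: L -> forall l : 'I_m,
          [/\ E rho x k y l = 0, E rho x l y k = 0,
              E rho y k x l = 0 & E rho y l x k = 0])
     /\
     (* (ii.c) *)
     (forall (pi1 pi2 : 'S_m) (c : 'I_m -> C),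
        realpart rho = \sum_(t < m) c t *:
          delta_mx (mxvec_index (pi1 t) (pi2 t)) (mxvec_index (pi1 t) (pi2 t)) ->
        rho = realpart rho /\ separable (realpart rho))).
Proof.
split.
  move=> m n p q rho [pr _] hp hq; split.
    rewrite -hp trB_real; apply: rank_real; rewrite trB_sum.
    by apply: psd_sum => k; apply: psd_congr.
  rewrite -hq trA_real; apply: rank_real; rewrite trA_sum.
  by apply: psd_sum => k; apply: psd_congr.
move=> m rho p st pp hE hp; split; first exact: (zero_of_p0 st pp hE).
split; last exact: (part_iic st pp hE hp).
move=> x y K L _ hK hL k; rewrite in_setU => /orP [kK|kL] l.
  have [a b c d] := zero_of_p0 st pp hE (hK k kK) y l.
  by split.
have [a b c d] := zero_of_p0 st pp hE (hL k kL) x l.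
by split.
Qed.
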